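(* Let $1<q_1<q_2<\infty$. Then there exists a $2\pi$-periodic $\log$-H\''older continuous function $p:[0,2\pi]\to[q_1,q_2]$ (so $q_1\le p(\theta)\le q_2$ for all $\theta$) such that $H^{p(\cdot)}(\mathbb{D})\neq H^q(\mathbb{D})$ for every $q$ with $q_1\le q\le q_2$.
   Context: $\mathbb{D}$ is the open unit disk and $\mathbb{T}$ the unit circle. $p$ is $\log$-H\''older continuous if there is $C_{\log}>0$ with $|p(x)-p(y)|\le C_{\log}/\log(1/|x-y|)$ for all $x,y\in[0,2\pi]$. $L^{p(\cdot)}(\mathbb{T})$ is the space of measurable $f:\mathbb{T}\to\mathbb{C}$ with $\int_0^{2\pi}|f(e^{i\theta})|^{p(\theta)}\,d\theta<\infty$, with Luxemburg norm $\|f\|_{L^{p(\cdot)}(\mathbb{T})}=\inf\{\lambda>0:\int_0^{2\pi}|f(e^{i\theta})/\lambda|^{p(\theta)}d\theta\le1\}$. $H^{p(\cdot)}(\mathbb{D})$ is the space of analytic $f:\mathbb{D}\to\mathbb{C}$ with $\sup_{0\le r<1}\|f_r\|_{L^{p(\cdot)}(\mathbb{T})}<\infty$, where $f_r(\zeta)=f(r\zeta)$; $H^q(\mathbb{D})$ is the classical Hardy space (constant exponent $q$). *)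

(* Defs.v *)
From Stdlib Require Import Reals.
From Coquelicot Require Import Coquelicot.
Open Scope R_scope.

(* x ^ y for x >= 0 with the convention 0 ^ y = 0 (y > 0 throughout). *)
Definition powp (x y : R) : R := if Rle_dec x 0 then 0 else Rpower x y.

Definition polar (r t : R) : C := (r * cos t, r * sin t).

Definition analytic_on_disk (f : C -> C) : Prop :=
  forall z : C, Cmod z < 1 -> @ex_derive C_AbsRing C_NormedModule f z.

Definition log_Holder (p : R -> R) : Prop :=
  exists Clog : R, 0 < Clog /\
    forall x y : R, 0 <= x <= 2 * PI -> 0 <= y <= 2 * PI ->
      0 < Rabs (x - y) < 1 / 2 ->
      Rabs (p x - p y) <= Clog / ln (1 / Rabs (x - y)).

Definition modular (p : R -> R) (g : R -> C) : R :=
  RInt (fun t => powp (Cmod (g t)) (p t)) 0 (2 * PI).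

(* Luxemburg norm in L^{p(.)}(T), g given as a function of theta *)
Definition lux_norm (p : R -> R) (g : R -> C) : Rbar :=
  Glb_Rbar (fun lam => 0 < lam /\
     modular p (fun t => Cmult (g t) (RtoC (/ lam))) <= 1).

Definition circ (f : C -> C) (r : R) : R -> C := fun t => f (polar r t).

Definition in_Hpvar (p : R -> R) (f : C -> C) : Prop :=
  analytic_on_disk f /\
  exists M : R, forall r : R, 0 <= r < 1 ->
    Rbar_le (lux_norm p (circ f r)) (Finite M).

Definition in_Hq (q : R) (f : C -> C) : Prop :=
  analytic_on_disk f /\
  exists M : R, forall r : R, 0 <= r < 1 ->
    RInt (fun t => powp (Cmod (circ f r t)) q) 0 (2 * PI) <= M.

(* Main.v *)
Require Import Defs.
From Stdlib Require Import Reals Lra.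
From Coquelicot Require Import Coquelicot.
Open Scope R_scope.

Lemma C_deriv_eps (f : C -> C) (z l : C) :
  (forall eps : R, 0 < eps -> exists delta : R, 0 < delta /\
     forall w : C, Cmod (w - z) < delta ->
       Cmod (f w - f z - l * (w - z)) <= eps * Cmod (w - z)) ->
  is_derive f z l.
Proof.
  intros H. split.
  - apply is_linear_scal_l.
  - intros x Hx.
    pose proof (@is_filter_lim_locally_unique C_AbsRing (AbsRing_NormedModule C_AbsRing) z x Hx) as Hzx. subst x.
    intros eps. destruct (H eps (cond_pos eps)) as [d [Hd Hw]].
    exists (mkposreal _ Hd). intros w Hb.
    change (Cmod (minus w z) < d) in Hb.
    change (Cmod (minus (minus (f w) (f z)) (scal (minus w z) l)) <= eps * Cmod (minus w z)).
    assert (E: minus w z = (w - z)%C) by reflexivity.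
    assert (E2: minus (minus (f w) (f z)) (scal (minus w z) l) = (f w - f z - l * (w - z))%C).
    { change (f w - f z - (w - z) * l = f w - f z - l * (w - z))%C. ring. }
    rewrite E2, E. apply Hw. rewrite <- E. exact Hb.
Qed.
Lemma dlim_bound (f : R -> R) (l : R) : derivable_pt_lim f 0 l ->
  forall eps, 0 < eps -> exists d, 0 < d /\ forall h, Rabs h < d ->
    Rabs (f h - f 0 - l * h) <= eps * Rabs h.
Proof.
  intros H eps He. destruct (H eps He) as [d Hd].
  exists d. split. apply cond_pos. intros h Hh.
  destruct (Req_dec h 0) as [->|Hn].
  - rewrite Rabs_R0. replace (f 0 - f 0 - l * 0) with 0 by ring. rewrite Rabs_R0; lra.
  - specialize (Hd h Hn Hh). rewrite Rplus_0_l in Hd.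
    replace (f h - f 0 - l * h) with (((f h - f 0) / h - l) * h) by (field; auto).
    rewrite Rabs_mult. apply Rmult_le_compat_r. apply Rabs_pos. lra.
Qed.

Lemma Cmod_le_sum (x y : R) : Cmod (x, y) <= 2 * (Rabs x + Rabs y).
Proof.
  eapply Rle_trans. apply Cmod_2Rmax. simpl.
  assert (sqrt 2 <= 2).
  { rewrite <- (sqrt_square 2) at 2 by lra. apply sqrt_le_1_alt. lra. }
  assert (0 <= Rmax (Rabs x) (Rabs y)) by (eapply Rle_trans; [apply Rabs_pos|apply Rmax_l]).
  assert (Rmax (Rabs x) (Rabs y) <= Rabs x + Rabs y).
  { apply Rmax_lub; pose proof (Rabs_pos x); pose proof (Rabs_pos y); lra. }
  nra.
Qed.

Lemma abs_fst_le (z : C) : Rabs (fst z) <= Cmod z.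
Proof. eapply Rle_trans; [|apply Rmax_Cmod]. apply Rmax_l. Qed.
Lemma abs_snd_le (z : C) : Rabs (snd z) <= Cmod z.
Proof. eapply Rle_trans; [|apply Rmax_Cmod]. apply Rmax_r. Qed.

Definition CE (z : C) : C := (exp (fst z) * cos (snd z), exp (fst z) * sin (snd z)).

Lemma CE_add (z h : C) : CE (z + h)%C = (CE z * CE h)%C.
Proof.
  destruct z as [a b]; destruct h as [c d]. unfold CE; simpl.
  rewrite exp_plus, cos_plus, sin_plus. unfold Cmult; simpl. f_equal; ring.
Qed.

Lemma Cmod_CE (z : C) : Cmod (CE z) = exp (fst z).
Proof.
  unfold CE, Cmod; cbn [fst snd].
  assert (E: (exp (fst z) * cos (snd z)) ^ 2 + (exp (fst z) * sin (snd z)) ^ 2 = (exp (fst z))^2 * (Rsqr (sin (snd z)) + Rsqr (cos (snd z)))) by (unfold Rsqr; ring).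
  rewrite E, sin2_cos2, Rmult_1_r.
  rewrite sqrt_pow2; auto. left; apply exp_pos.
Qed.

Lemma CE_small : forall eps, 0 < eps -> exists d, 0 < d /\ forall h : C, Cmod h < d ->
  Cmod (CE h - 1 - h)%C <= eps * Cmod h.
Proof.
  intros eps He.
  set (e := Rmin 1 (eps / 24)).
  assert (He0 : 0 < e) by (apply Rmin_pos; lra).
  assert (He1 : e <= 1) by apply Rmin_l.
  assert (He2 : e <= eps/24) by apply Rmin_r.
  destruct (dlim_bound exp 1 ltac:(pose proof (derivable_pt_lim_exp 0) as X; rewrite exp_0 in X; exact X) e He0) as [d1 [Hd1 H1]].
  destruct (dlim_bound cos 0 ltac:(pose proof (derivable_pt_lim_cos 0) as X; rewrite sin_0, Ropp_0 in X; exact X) e He0) as [d2 [Hd2 H2]].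
  destruct (dlim_bound sin 1 ltac:(pose proof (derivable_pt_lim_sin 0) as X; rewrite cos_0 in X; exact X) e He0) as [d3 [Hd3 H3]].
  rewrite exp_0 in H1. rewrite cos_0 in H2. rewrite sin_0 in H3.
  exists (Rmin (Rmin d1 (Rmin d2 d3)) (Rmin 1 (e/2))). split.
  { repeat apply Rmin_pos; lra. }
  intros [a b] Hh.
  pose proof (abs_fst_le (a,b)) as Ha; pose proof (abs_snd_le (a,b)) as Hb; simpl in Ha, Hb.
  assert (Hm1 := Rmin_l (Rmin d1 (Rmin d2 d3)) (Rmin 1 (e/2))).
  assert (Hm2 := Rmin_r (Rmin d1 (Rmin d2 d3)) (Rmin 1 (e/2))).
  assert (Hd1' := Rmin_l d1 (Rmin d2 d3)).
  assert (Hd2' := Rmin_l d2 d3). assert (Hd3' := Rmin_r d2 d3).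
  assert (Hx := Rmin_r d1 (Rmin d2 d3)).
  assert (Hu1 := Rmin_l 1 (e/2)). assert (Hu2 := Rmin_r 1 (e/2)).
  specialize (H1 a ltac:(lra)). specialize (H2 b ltac:(lra)). specialize (H3 b ltac:(lra)).
  replace (CE (a, b) - 1 - (a, b))%C with
    ((exp a - 1 - 1 * a) * cos b + (1 + a) * (cos b - 1 - 0 * b),
     ((exp a - 1 - 1 * a) + a) * sin b + (sin b - 0 - 1 * b)).
  2:{ unfold CE, Cminus, Cplus, Copp; simpl. f_equal; ring. }
  eapply Rle_trans. apply Cmod_le_sum.
  set (A := Rabs a) in *. set (B := Rabs b) in *.
  assert (Hc : Rabs (cos b) <= 1) by (apply Rabs_le; apply COS_bound).
  assert (Hs : Rabs (sin b) <= 2 * B).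
  { replace (sin b) with ((sin b - 0 - 1*b) + b) by ring.
    eapply Rle_trans. apply Rabs_triang. change (Rabs b) with B.
    assert (0 <= B) by apply Rabs_pos. assert (e * B <= B) by nra. lra. }
  assert (Ha1 : Rabs (1 + a) <= 2).
  { eapply Rle_trans. apply Rabs_triang. rewrite Rabs_R1. fold A. lra. }
  assert (R1 : Rabs ((exp a - 1 - 1 * a) * cos b + (1 + a) * (cos b - 1 - 0 * b)) <= e * A + 2 * (e * B)).
  { eapply Rle_trans. apply Rabs_triang. rewrite !Rabs_mult.
    apply Rplus_le_compat.
    - pose proof (Rabs_pos (exp a - 1 - 1*a)). pose proof (Rabs_pos (cos b)). nra.
    - pose proof (Rabs_pos (1+a)). pose proof (Rabs_pos (cos b - 1 - 0*b)). nra. }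
  assert (R2 : Rabs (((exp a - 1 - 1 * a) + a) * sin b + (sin b - 0 - 1 * b)) <= (e * A + A) * (2 * B) + e * B).
  { eapply Rle_trans. apply Rabs_triang. rewrite !Rabs_mult.
    apply Rplus_le_compat; [|lra].
    apply Rmult_le_compat; try apply Rabs_pos; auto.
    eapply Rle_trans. apply Rabs_triang. fold A. lra. }
  assert (A <= e/2) by lra.
  assert (0 <= A) by apply Rabs_pos. assert (0 <= B) by apply Rabs_pos.
  assert (e * A + A <= e) by nra.
  assert ((e * A + A) * (2 * B) <= 2 * e * B) by nra.
  pose proof (Rabs_pos (cos b)).
  assert (Cmod (a,b) >= 0) by (apply Rle_ge, Cmod_ge_0).
  nra.
Qed.

Lemma C_cont_eps (g : C_UniformSpace -> R) (w : C) : continuous g w ->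
  forall d, 0 < d -> exists e, 0 < e /\ forall v : C, Cmod (v - w) < e -> Rabs (g v - g w) < d.
Proof.
  intros H d Hd.
  assert (L : locally (g w) (ball (g w) (mkposreal d Hd))) by apply locally_ball.
  specialize (H _ L). destruct H as [e He].
  exists e. split. apply cond_pos. intros v Hv. apply He. split.
  - change (Rabs (fst v - fst w) < e). eapply Rle_lt_trans; [|exact Hv].
    apply (abs_fst_le (v - w)%C).
  - change (Rabs (snd v - snd w) < e). eapply Rle_lt_trans; [|exact Hv].
    apply (abs_snd_le (v - w)%C).
Qed.
Lemma cont_Cmod (w : C) : continuous (fun v : C_UniformSpace => Cmod v) w.
Proof.
  destruct w as [x y].
  apply (continuous_comp (fun v : C_UniformSpace => fst v ^ 2 + snd v ^ 2) sqrt).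
  2: apply continuous_sqrt.
  apply (@continuous_plus C_UniformSpace R_AbsRing R_NormedModule).
  - simpl. apply (continuous_mult (fun v : C_UniformSpace => fst v) (fun v => fst v * 1)).
    apply continuous_fst.
    apply (continuous_mult (fun v : C_UniformSpace => fst v) (fun v => 1)).
    apply continuous_fst. apply continuous_const.
  - simpl. apply (continuous_mult (fun v : C_UniformSpace => snd v) (fun v => snd v * 1)).
    apply continuous_snd.
    apply (continuous_mult (fun v : C_UniformSpace => snd v) (fun v => 1)).
    apply continuous_snd. apply continuous_const.
Qed.

Lemma cont_quot (w : C) : fst w <> 0 -> continuous (fun v : C_UniformSpace => snd v / fst v) w.
Proof.
  destruct w as [x y]. simpl. intros Hx.
  apply (continuous_mult (fun v : C_UniformSpace => snd v) (fun v => / fst v)).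
  apply continuous_snd.
  apply (continuous_comp (fun v : C_UniformSpace => fst v) (fun t => / t)).
  apply continuous_fst. apply continuous_Rinv. exact Hx.
Qed.

Definition CL (w : C) : C := (ln (Cmod w), atan (snd w / fst w)).

Lemma CL_cont (w : C) : 0 < fst w -> forall d, 0 < d -> exists e, 0 < e /\
  forall v : C, Cmod (v - w) < e -> Cmod (CL v - CL w)%C < d.
Proof.
  intros Hw d Hd.
  assert (Hm : 0 < Cmod w).
  { apply Cmod_gt_0. intro E. rewrite E in Hw. simpl in Hw. lra. }
  destruct (C_cont_eps (fun v => ln (Cmod v)) w
     (continuous_comp _ ln w (cont_Cmod w) (continuous_ln _ Hm)) (d/4) ltac:(lra)) as [e1 [He1 H1]].
  destruct (C_cont_eps (fun v => atan (snd v / fst v)) w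
     (continuous_comp _ atan w (cont_quot w ltac:(lra)) (continuous_atan _)) (d/4) ltac:(lra)) as [e2 [He2 H2]].
  exists (Rmin e1 e2). split. apply Rmin_pos; auto.
  intros v Hv.
  specialize (H1 v ltac:(pose proof (Rmin_l e1 e2); lra)).
  specialize (H2 v ltac:(pose proof (Rmin_r e1 e2); lra)).
  unfold CL, Cminus, Cplus, Copp. simpl.
  eapply Rle_lt_trans. apply Cmod_le_sum. simpl in H1, H2.
  unfold Rminus in H1, H2. lra.
Qed.

Lemma CE_CL (w : C) : 0 < fst w -> CE (CL w) = w.
Proof.
  intros Hw. destruct w as [x y]. simpl in Hw.
  assert (Hm : 0 < Cmod (x, y)).
  { apply Cmod_gt_0. intro E. injection E; intros; lra. }
  unfold CE, CL. cbn [fst snd]. rewrite exp_ln by exact Hm.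
  rewrite cos_atan, sin_atan.
  assert (Hs : sqrt (1 + (y / x)²) = Cmod (x, y) / x).
  { unfold Cmod. cbn [fst snd].
    replace (1 + (y / x)²) with ((x ^ 2 + y ^ 2) / (x ^ 2)) by (unfold Rsqr; field; lra).
    rewrite sqrt_div_alt by (apply pow2_gt_0; lra).
    rewrite sqrt_pow2 by lra. reflexivity. }
  rewrite Hs. f_equal; field; split; lra.
Qed.

Lemma CE_deriv (z : C) : is_derive CE z (CE z).
Proof.
  apply C_deriv_eps. intros eps He.
  assert (Hz : 0 < exp (fst z)) by apply exp_pos.
  destruct (CE_small (eps / exp (fst z)) ltac:(apply Rdiv_lt_0_compat; auto)) as [d [Hd H]].
  exists d. split; auto. intros w Hw.
  replace w with (z + (w - z))%C at 1 by ring.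
  rewrite CE_add.
  replace (CE z * CE (w - z) - CE z - CE z * (w - z))%C with (CE z * (CE (w - z) - 1 - (w - z)))%C by ring.
  rewrite Cmod_mult, Cmod_CE.
  specialize (H _ Hw).
  replace (eps * Cmod (w - z)) with (exp (fst z) * (eps / exp (fst z) * Cmod (w - z))) by (field; lra).
  apply Rmult_le_compat_l; lra.
Qed.
Lemma CL_deriv (w : C) : 0 < fst w -> is_derive CL w (/ w)%C.
Proof.
  intros Hw.
  assert (Hw0 : w <> 0%C) by (intro E; rewrite E in Hw; simpl in Hw; lra).
  assert (HW : 0 < Cmod w) by (apply Cmod_gt_0; auto).
  apply C_deriv_eps. intros eps He.
  set (e' := Rmin (1/2) (eps * Cmod w / 2)).
  assert (He'0 : 0 < e') by (apply Rmin_pos; [lra| apply Rmult_lt_0_compat; [apply Rmult_lt_0_compat|]; lra]).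
  assert (He'1 : e' <= 1/2) by apply Rmin_l.
  assert (He'2 : e' <= eps * Cmod w / 2) by apply Rmin_r.
  destruct (CE_small e' He'0) as [d [Hd HE]].
  destruct (CL_cont w Hw d Hd) as [e [He0 HC]].
  exists (Rmin e (fst w)). split. apply Rmin_pos; auto.
  intros v Hv.
  assert (Hv1 : Cmod (v - w) < e) by (pose proof (Rmin_l e (fst w)); lra).
  assert (Hv2 : Cmod (v - w) < fst w) by (pose proof (Rmin_r e (fst w)); lra).
  assert (Hfv : 0 < fst v).
  { pose proof (abs_fst_le (v - w)%C) as X. simpl in X.
    assert (X' : Rabs (fst v + - fst w) < fst w) by lra.
    apply Rabs_def2 in X' as [X1 X2]. lra. }
  set (m := (CL v - CL w)%C).
  assert (Hm : Cmod m < d) by (apply HC; auto).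
  assert (Hk : (v - w)%C = (w * (CE m - 1))%C).
  { assert (Ev : v = CE (CL v)) by (symmetry; apply CE_CL; auto).
    assert (Ew : w = CE (CL w)) by (symmetry; apply CE_CL; auto).
    replace (CL v) with (CL w + m)%C in Ev by (unfold m; ring).
    rewrite CE_add in Ev. rewrite <- Ew in Ev. rewrite Ev at 1. ring. }
  assert (Hq : (/ w * (v - w))%C = (CE m - 1)%C).
  { rewrite Hk. field. auto. }
  rewrite Hq.
  replace (m - (CE m - 1))%C with (- (CE m - 1 - m))%C by ring.
  rewrite Cmod_opp.
  specialize (HE m Hm).
  assert (Hkm : Cmod (CE m - 1)%C = Cmod (v - w) / Cmod w).
  { rewrite Hk, Cmod_mult. field. lra. }
  assert (Hmb : Cmod m <= Cmod (CE m - 1)%C + Cmod (CE m - 1 - m)%C).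
  { replace m with ((CE m - 1) - (CE m - 1 - m))%C at 1 by ring.
    eapply Rle_trans. apply Cmod_triangle. rewrite Cmod_opp. lra. }
  rewrite Hkm in Hmb.
  assert (Hm2 : Cmod m <= 2 * (Cmod (v - w) / Cmod w)).
  { pose proof (Cmod_ge_0 m). nra. }
  eapply Rle_trans. exact HE.
  assert (0 <= Cmod m) by apply Cmod_ge_0.
  assert (0 <= Cmod (v - w)) by apply Cmod_ge_0.
  apply Rle_trans with (e' * (2 * (Cmod (v - w) / Cmod w))). nra.
  replace (e' * (2 * (Cmod (v - w) / Cmod w))) with ((2 * e' / Cmod w) * Cmod (v - w)) by (field; lra).
  apply Rmult_le_compat_r; auto.
  apply Rle_trans with (2 * (eps * Cmod w / 2) / Cmod w).
  unfold Rdiv. apply Rmult_le_compat_r. left; apply Rinv_0_lt_compat; auto. lra.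
  right. field. lra.
Qed.
Lemma C_deriv_eps_inv (f : C -> C) (z l : C) : is_derive f z l ->
  (forall eps : R, 0 < eps -> exists delta : R, 0 < delta /\
     forall w : C, Cmod (w - z) < delta ->
       Cmod (f w - f z - l * (w - z)) <= eps * Cmod (w - z)).
Proof.
  intros [_ H] eps He.
  assert (Hz : @is_filter_lim (AbsRing_NormedModule C_AbsRing) (@locally (AbsRing_UniformSpace C_AbsRing) z) z) by (intros P HP; exact HP).
  specialize (H z Hz (mkposreal eps He)).
  destruct H as [d Hd]. exists d. split. apply cond_pos.
  intros w Hw. specialize (Hd w Hw).
  change (Cmod (f w - f z - (w - z) * l)%C <= eps * Cmod (w - z)%C) in Hd.
  replace (l * (w - z))%C with ((w - z) * l)%C by ring. exact Hd.
Qed.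

Lemma C_deriv_eps' (f : C -> C) (z l : C) :
  (forall eps : R, 0 < eps -> exists delta : R, 0 < delta /\
     forall w : C, Cmod (w - z) < delta ->
       Cmod (f w - f z - l * (w - z)) <= eps * Cmod (w - z)) ->
  @is_derive C_AbsRing (AbsRing_NormedModule C_AbsRing) f z l.
Proof.
  intros H. split.
  - apply is_linear_scal_l.
  - intros x Hx.
    pose proof (@is_filter_lim_locally_unique C_AbsRing (AbsRing_NormedModule C_AbsRing) z x Hx) as Hzx. subst x.
    intros eps. destruct (H eps (cond_pos eps)) as [d [Hd Hw]].
    exists (mkposreal _ Hd). intros w Hb.
    change (Cmod (minus w z) < d) in Hb.
    change (Cmod (minus (minus (f w) (f z)) (scal (minus w z) l)) <= eps * Cmod (minus w z)).
    assert (E: minus w z = (w - z)%C) by reflexivity.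
    assert (E2: minus (minus (f w) (f z)) (scal (minus w z) l) = (f w - f z - l * (w - z))%C).
    { change (f w - f z - (w - z) * l = f w - f z - l * (w - z))%C. ring. }
    rewrite E2, E. apply Hw. rewrite <- E. exact Hb.
Qed.

Lemma C_deriv_scal (f : C -> C) (z l c : C) : is_derive f z l ->
  @is_derive C_AbsRing (AbsRing_NormedModule C_AbsRing) (fun w => f w * c)%C z (l * c)%C.
Proof.
  intros H. apply C_deriv_eps'. intros eps He.
  destruct (C_deriv_eps_inv f z l H (eps / (Cmod c + 1))) as [d [Hd Hw]].
  { apply Rdiv_lt_0_compat; auto. pose proof (Cmod_ge_0 c); lra. }
  exists d. split; auto. intros w Hwz.
  replace (f w * c - f z * c - l * c * (w - z))%C with ((f w - f z - l * (w - z)) * c)%C by ring.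
  rewrite Cmod_mult. specialize (Hw w Hwz).
  pose proof (Cmod_ge_0 c). pose proof (Cmod_ge_0 (w - z)%C).
  pose proof (Cmod_ge_0 (f w - f z - l * (w - z))%C).
  apply Rle_trans with (eps / (Cmod c + 1) * Cmod (w - z) * Cmod c). nra.
  replace (eps * Cmod (w - z)) with (eps / (Cmod c + 1) * Cmod (w - z) * (Cmod c + 1)) by (field; lra).
  assert (0 <= eps / (Cmod c + 1)) by (apply Rlt_le, Rdiv_lt_0_compat; lra).
  nra.
Qed.

Definition Hpow (s : R) (w : C) : C := CE (CL w * RtoC (- s))%C.

Lemma Hpow_deriv (s : R) (w : C) : 0 < fst w -> ex_derive (Hpow s) w.
Proof.
  intros Hw. eexists. unfold Hpow.
  apply (is_derive_comp CE (fun w => CL w * RtoC (-s))%C).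
  apply CE_deriv.
  apply C_deriv_scal. apply CL_deriv; auto.
Qed.

Lemma Cmod_Hpow (s : R) (w : C) : w <> 0%C -> Cmod (Hpow s w) = Rpower (Cmod w) (- s).
Proof.
  intros Hw. unfold Hpow. rewrite Cmod_CE. unfold Rpower, CL. simpl. f_equal. ring.
Qed.

Lemma affine_deriv (a b : C) (z : C) : @is_derive C_AbsRing (AbsRing_NormedModule C_AbsRing) (fun z => a + b * z)%C z b.
Proof.
  apply C_deriv_eps'. intros eps He. exists 1. split. lra. intros w _. cbv beta.
  assert (E : (a + b * w - (a + b * z) - b * (w - z))%C = RtoC 0) by ring.
  rewrite E, Cmod_0. pose proof (Cmod_ge_0 (w - z)). nra.
Qed.

Lemma Hpow_affine_analytic (s : R) (a b : C) :
  (forall z : C, Cmod z < 1 -> 0 < fst (a + b * z)%C) ->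
  analytic_on_disk (fun z => Hpow s (a + b * z)%C).
Proof.
  intros H z Hz. destruct (Hpow_deriv s _ (H z Hz)) as [l Hl].
  eexists. apply (is_derive_comp (Hpow s) (fun z => a + b * z)%C). exact Hl.
  apply affine_deriv.
Qed.

Lemma sin_lower (a : R) : 0 <= a -> a <= 4 -> a - a^3/6 <= sin a.
Proof.
  intros H0 H4. destruct (pre_sin_bound a 0 H0 H4) as [H _].
  unfold sin_approx, sin_term in H. simpl in H. lra.
Qed.

Lemma sin_upper (a : R) : 0 <= a -> a <= 4 -> sin a <= a - a^3/6 + a^5/120.
Proof.
  intros H0 H4. destruct (pre_sin_bound a 0 H0 H4) as [_ H].
  unfold sin_approx, sin_term in H. simpl in H. lra.
Qed.

Lemma abs_sin_le_pos (b : R) : 0 <= b -> Rabs (sin b) <= b.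
Proof.
  intros Hb. pose proof (SIN_bound b).
  destruct (Rle_dec b 1).
  - pose proof (sin_lower b Hb ltac:(lra)). pose proof (sin_upper b Hb ltac:(lra)).
    assert (0 <= b^3) by (apply pow_le; lra). assert (b^2 <= 1) by nra.
    assert (b^5 <= b^3) by (replace (b^5) with (b^3 * b^2) by ring; nra).
    assert (b^3 <= b) by (replace (b^3) with (b * b^2) by ring; nra).
    assert (b - b^3/6 + b^5/120 <= b) by lra. assert (0 <= b - b^3/6) by lra.
    apply Rabs_le. lra.
  - apply Rabs_le. lra.
Qed.

Lemma abs_sin_le (b : R) : Rabs (sin b) <= Rabs b.
Proof.
  destruct (Rle_dec 0 b).
  - rewrite (Rabs_right b) by lra. apply abs_sin_le_pos; lra.
  - rewrite (Rabs_left b) by lra. replace b with (- (- b)) by ring.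
    rewrite sin_neg, Rabs_Ropp. replace (- - b) with b by ring. apply abs_sin_le_pos. lra.
Qed.

Lemma cos_lip (x y : R) : Rabs (cos x - cos y) <= Rabs (x - y).
Proof.
  rewrite form2. rewrite !Rabs_mult.
  pose proof (abs_sin_le ((x - y)/2)). pose proof (SIN_bound ((x+y)/2)).
  assert (Rabs (sin ((x + y) / 2)) <= 1) by (apply Rabs_le; lra).
  replace (Rabs ((x - y)/2)) with (Rabs (x - y) / 2) in H.
  2:{ unfold Rdiv. rewrite Rabs_mult. rewrite (Rabs_right (/2)) by lra. ring. }
  rewrite Rabs_left by lra.
  pose proof (Rabs_pos (sin ((x - y) / 2))). pose proof (Rabs_pos (sin ((x + y) / 2))).
  nra.
Qed.

Definition clamp01 (x : R) : R := Rmax 0 (Rmin 1 x).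

Lemma clamp01_lip (x y : R) : Rabs (clamp01 x - clamp01 y) <= Rabs (x - y).
Proof.
  unfold clamp01, Rmax, Rmin.
  repeat destruct Rle_dec; unfold Rabs; repeat destruct Rcase_abs; lra.
Qed.

Lemma clamp01_range (x : R) : 0 <= clamp01 x <= 1.
Proof. unfold clamp01, Rmax, Rmin. repeat destruct Rle_dec; lra. Qed.

Lemma clamp01_1 (x : R) : 1 <= x -> clamp01 x = 1.
Proof. intros. unfold clamp01, Rmax, Rmin. repeat destruct Rle_dec; lra. Qed.

Lemma clamp01_0 (x : R) : x <= 0 -> clamp01 x = 0.
Proof. intros. unfold clamp01, Rmax, Rmin. repeat destruct Rle_dec; lra. Qed.

Lemma lip_continuous (f : R -> R) (x K : R) : 0 < K ->
  (forall y, Rabs (f y - f x) <= K * Rabs (y - x)) -> continuous f x.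
Proof.
  intros HK H. apply continuity_pt_filterlim.
  intros eps He. exists (eps / K). split. apply Rdiv_lt_0_compat; auto.
  intros y [_ Hy]. simpl in *. unfold R_dist in *.
  eapply Rle_lt_trans. apply H.
  replace eps with (K * (eps / K)) by (field; lra).
  apply Rmult_lt_compat_l; auto.
Qed.

Definition pex (q1 q2 t : R) : R := q1 + (q2 - q1) * clamp01 (cos t + 1/2).

Lemma pex_lip (q1 q2 x y : R) : q1 < q2 ->
  Rabs (pex q1 q2 x - pex q1 q2 y) <= (q2 - q1) * Rabs (x - y).
Proof.
  intros H. unfold pex.
  replace (q1 + (q2 - q1) * clamp01 (cos x + 1 / 2) - (q1 + (q2 - q1) * clamp01 (cos y + 1 / 2)))
    with ((q2 - q1) * (clamp01 (cos x + 1 / 2) - clamp01 (cos y + 1 / 2))) by ring.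
  rewrite Rabs_mult, (Rabs_right (q2 - q1)) by lra.
  apply Rmult_le_compat_l. lra.
  eapply Rle_trans. apply clamp01_lip.
  replace (cos x + 1/2 - (cos y + 1/2)) with (cos x - cos y) by ring. apply cos_lip.
Qed.

Lemma pex_cont (q1 q2 t : R) : q1 < q2 -> continuous (pex q1 q2) t.
Proof.
  intros H. apply (lip_continuous _ _ (q2 - q1)). lra.
  intros y. apply pex_lip. auto.
Qed.

Lemma pex_period (q1 q2 t : R) : pex q1 q2 (t + 2 * PI) = pex q1 q2 t.
Proof.
  unfold pex. f_equal. f_equal. f_equal.
  rewrite cos_plus, cos_2PI, sin_2PI. ring.
Qed.

Lemma pex_range (q1 q2 t : R) : q1 < q2 -> q1 <= pex q1 q2 t <= q2.
Proof.
  intros H. unfold pex. pose proof (clamp01_range (cos t + 1/2)). nra.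
Qed.

Lemma pex_hi (q1 q2 t : R) : 1/2 <= cos t -> pex q1 q2 t = q2.
Proof. intros H. unfold pex. rewrite clamp01_1 by lra. ring. Qed.

Lemma pex_lo (q1 q2 t : R) : cos t <= -1/2 -> pex q1 q2 t = q1.
Proof. intros H. unfold pex. rewrite clamp01_0 by lra. ring. Qed.

Lemma ln_inv_lt (u : R) : 0 < u -> ln (/ u) < / u.
Proof.
  intros Hu. destruct (Rle_dec (ln (/ u)) 0).
  - pose proof (Rinv_0_lt_compat u Hu). lra.
  - pose proof (exp_ineq1 (ln (/ u)) ltac:(lra)). rewrite exp_ln in H.
    lra. apply Rinv_0_lt_compat; auto.
Qed.

Lemma pex_logHolder (q1 q2 : R) : q1 < q2 ->
  exists Clog : R, 0 < Clog /\
    forall x y : R, 0 <= x <= 2 * PI -> 0 <= y <= 2 * PI ->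
      0 < Rabs (x - y) < 1 / 2 ->
      Rabs (pex q1 q2 x - pex q1 q2 y) <= Clog / ln (1 / Rabs (x - y)).
Proof.
  intros H. exists (q2 - q1). split. lra.
  intros x y _ _ [Hu1 Hu2]. set (u := Rabs (x - y)) in *.
  eapply Rle_trans. apply pex_lip. auto. fold u.
  assert (HL : 0 < ln (1 / u)).
  { rewrite <- ln_1. apply ln_increasing. lra.
    apply (Rmult_lt_reg_r u). auto. unfold Rdiv. rewrite Rmult_assoc, Rinv_l; lra. }
  assert (HL2 : ln (1 / u) < / u) by (unfold Rdiv; rewrite Rmult_1_l; apply ln_inv_lt; auto).
  assert (u * ln (1/u) <= 1).
  { apply Rlt_le. apply (Rmult_lt_compat_l u) in HL2; auto. rewrite Rinv_r in HL2; lra. }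
  assert (Hu : u <= / ln (1/u)).
  { apply (Rmult_le_reg_r (ln (1/u))). auto. rewrite Rinv_l; lra. }
  unfold Rdiv at 1. apply Rmult_le_compat_l; lra.
Qed.
Lemma one_minus_cos (u : R) : 1 - cos u = 2 * (sin (u/2))^2.
Proof.
  replace u with (2 * (u/2)) at 1 by field. rewrite cos_2a_sin. ring.
Qed.

Lemma cos_lower (u : R) : 0 <= u <= PI -> u^2/18 <= 1 - cos u.
Proof.
  intros [H0 H1]. pose proof PI_4.
  rewrite one_minus_cos.
  assert (Hs := sin_lower (u/2) ltac:(lra) ltac:(lra)).
  assert (u/2 - (u/2)^3/6 >= u/6) by nra.
  nra.
Qed.

Lemma cos_upper (u : R) : 0 <= u <= 2 -> 1 - cos u <= u^2/2.
Proof.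
  intros [H0 H1].
  rewrite one_minus_cos.
  assert (Hs := sin_lower (u/2) ltac:(lra) ltac:(lra)).
  assert (Hs2 := sin_upper (u/2) ltac:(lra) ltac:(lra)).
  assert (0 <= u/2 - (u/2)^3/6) by nra.
  assert ((u/2) - (u/2)^3/6 + (u/2)^5/120 <= u/2) by nra.
  nra.
Qed.

Definition cm (r u : R) : R := sqrt (1 - 2 * r * cos u + r ^ 2).

Lemma cm_inside (r u : R) : 1 - 2 * r * cos u + r ^ 2 = (1 - r)^2 + 2 * r * (1 - cos u).
Proof. ring. Qed.

Lemma cm_pos (r u : R) : 0 <= r < 1 -> 0 < cm r u.
Proof.
  intros Hr. unfold cm. apply sqrt_lt_R0. rewrite cm_inside.
  pose proof (COS_bound u). nra.
Qed.

Lemma cm_lower (r u : R) : 0 <= r <= 1 -> 0 <= u <= PI -> ((1 - r) + u) / 10 <= cm r u.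
Proof.
  intros Hr Hu. pose proof PI_4. unfold cm.
  rewrite <- (sqrt_pow2 (((1 - r) + u) / 10)) by lra.
  apply sqrt_le_1_alt. rewrite cm_inside.
  pose proof (cos_lower u Hu).
  destruct (Rle_dec (1/2) r).
  - assert (0 <= (2*r - 1) * (1 - cos u)) by (apply Rmult_le_pos; pose proof (pow2_ge_0 u); lra).
    assert (2 * r * (1 - cos u) >= u^2/18) by lra.
    assert (((1 - r) + u)^2 <= 2 * (1-r)^2 + 2 * u^2) by (pose proof (pow2_ge_0 ((1-r) - u)); nra).
    replace ((((1 - r) + u) / 10)^2) with (((1 - r) + u)^2 / 100) by field. pose proof (pow2_ge_0 (1-r)); pose proof (pow2_ge_0 u); lra.
  - assert (2 * r * (1 - cos u) >= 0) by (pose proof (pow2_ge_0 u); apply Rle_ge, Rmult_le_pos; lra).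
    replace ((((1 - r) + u) / 10)^2) with (((1 - r) + u)^2 / 100) by field.
    assert (((1 - r) + u)^2 <= 25) by nra. nra.
Qed.

Lemma cm_upper (r u : R) : 0 <= r <= 1 -> 0 <= u <= 2 -> cm r u <= (1 - r) + u.
Proof.
  intros Hr Hu. unfold cm.
  rewrite <- (sqrt_pow2 ((1 - r) + u)) by lra.
  apply sqrt_le_1_alt. rewrite cm_inside.
  pose proof (cos_upper u Hu).
  pose proof (COS_bound u). nra.
Qed.

Lemma cp_lower (r t : R) : 0 <= r <= 1 -> -1/2 <= cos t -> 1/2 <= sqrt (1 + 2 * r * cos t + r ^ 2).
Proof.
  intros Hr Hc. rewrite <- (sqrt_pow2 (1/2)) by lra. apply sqrt_le_1_alt. nra.
Qed.
Lemma exp_ln_shift (c y : R) : 0 < y -> exp (c * ln y) * / y = exp ((c - 1) * ln y).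
Proof.
  intros Hy. replace ((c - 1) * ln y) with (c * ln y + - ln y) by ring.
  rewrite exp_plus, exp_Ropp, exp_ln by auto. reflexivity.
Qed.

Lemma is_derive_eq (f : R -> R) (x l l' : R) : is_derive f x l -> l = l' -> is_derive f x l'.
Proof. intros H <-. exact H. Qed.

Lemma is_derive_pow_aff (x a c t : R) : 0 < x + (t - a) ->
  is_derive (fun t => Rpower (x + (t - a)) c) t (c * Rpower (x + (t - a)) (c - 1)).
Proof.
  intros H. unfold Rpower. auto_derive. lra.
  replace (t + - a) with (t - a) by ring.
  rewrite <- (exp_ln_shift c) by auto. field. lra.
Qed.

Lemma is_derive_pow_aff' (x b c t : R) : 0 < x + (b - t) ->
  is_derive (fun t => Rpower (x + (b - t)) c) t (- c * Rpower (x + (b - t)) (c - 1)).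
Proof.
  intros H. unfold Rpower. auto_derive. lra.
  replace (b + - t) with (b - t) by ring.
  rewrite <- (exp_ln_shift c) by auto. field. lra.
Qed.

Lemma is_derive_ln_aff (x a t : R) : 0 < x + (t - a) ->
  is_derive (fun t => ln (x + (t - a))) t (/ (x + (t - a))).
Proof.
  intros H. auto_derive. lra. field. lra.
Qed.

Lemma int_pow_left (x a b be : R) : 0 < x -> a <= b -> 0 < be < 1 ->
  is_RInt (fun t => Rpower (x + (t - a)) (- be)) a b
    ((Rpower (x + (b - a)) (1 - be) - Rpower x (1 - be)) / (1 - be)).
Proof.
  intros Hx Hab Hbe.
  replace ((Rpower (x + (b - a)) (1 - be) - Rpower x (1 - be)) / (1 - be)) with
    (minus ((fun t => Rpower (x + (t - a)) (1 - be) / (1 - be)) b)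
           ((fun t => Rpower (x + (t - a)) (1 - be) / (1 - be)) a)).
  2:{ unfold minus, plus, opp; simpl. replace (a - a) with 0 by ring. rewrite Rplus_0_r. field. lra. }
  apply (is_RInt_derive (fun t => Rpower (x + (t - a)) (1 - be) / (1 - be)) (fun t => Rpower (x + (t - a)) (- be))).
  - intros t Ht. rewrite Rmin_left, Rmax_right in Ht by lra.
    assert (D := is_derive_pow_aff x a (1 - be) t ltac:(lra)).
    apply (is_derive_scal _ _ (/ (1 - be))) in D.
    eapply is_derive_ext; [| eapply is_derive_eq; [apply D|]].
    intros y; simpl. unfold Rdiv. ring.
    replace (1 - be - 1) with (- be) by ring. field. lra.
  - intros t Ht. rewrite Rmin_left, Rmax_right in Ht by lra.
    assert (E : ex_derive (fun t => Rpower (x + (t - a)) (- be)) t) by (eexists; apply is_derive_pow_aff; lra).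
    apply ex_derive_continuous in E. exact E.
Qed.

Lemma int_pow_right (x a b be : R) : 0 < x -> a <= b -> 0 < be < 1 ->
  is_RInt (fun t => Rpower (x + (b - t)) (- be)) a b
    ((Rpower (x + (b - a)) (1 - be) - Rpower x (1 - be)) / (1 - be)).
Proof.
  intros Hx Hab Hbe.
  replace ((Rpower (x + (b - a)) (1 - be) - Rpower x (1 - be)) / (1 - be)) with
    (minus ((fun t => - Rpower (x + (b - t)) (1 - be) / (1 - be)) b)
           ((fun t => - Rpower (x + (b - t)) (1 - be) / (1 - be)) a)).
  2:{ unfold minus, plus, opp; simpl. replace (b - b) with 0 by ring. rewrite Rplus_0_r. field. lra. }
  apply (is_RInt_derive (fun t => - Rpower (x + (b - t)) (1 - be) / (1 - be)) (fun t => Rpower (x + (b - t)) (- be))).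
  - intros t Ht. rewrite Rmin_left, Rmax_right in Ht by lra.
    assert (D := is_derive_pow_aff' x b (1 - be) t ltac:(lra)).
    apply (is_derive_scal _ _ (- / (1 - be))) in D.
    eapply is_derive_ext; [| eapply is_derive_eq; [apply D|]].
    intros y; simpl. unfold Rdiv. ring.
    replace (1 - be - 1) with (- be) by ring. field. lra.
  - intros t Ht. rewrite Rmin_left, Rmax_right in Ht by lra.
    assert (E : ex_derive (fun t => Rpower (x + (b - t)) (- be)) t) by (eexists; apply is_derive_pow_aff'; lra).
    apply ex_derive_continuous in E. exact E.
Qed.

Lemma int_inv_left (x a b : R) : 0 < x -> a <= b ->
  is_RInt (fun t => / (x + (t - a))) a b (ln (x + (b - a)) - ln x).
Proof.
  intros Hx Hab.
  replace (ln (x + (b - a)) - ln x) with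
    (minus ((fun t => ln (x + (t - a))) b) ((fun t => ln (x + (t - a))) a)).
  2:{ unfold minus, plus, opp; simpl. replace (a - a) with 0 by ring. rewrite Rplus_0_r. ring. }
  apply (is_RInt_derive (fun t => ln (x + (t - a))) (fun t => / (x + (t - a)))).
  - intros t Ht. rewrite Rmin_left, Rmax_right in Ht by lra.
    apply is_derive_ln_aff. lra.
  - intros t Ht. rewrite Rmin_left, Rmax_right in Ht by lra.
    assert (E : ex_derive (fun t => / (x + (t - a))) t) by (auto_derive; lra).
    apply ex_derive_continuous in E. exact E.
Qed.

Lemma Rpower_pos' (x y : R) : 0 < Rpower x y.
Proof. unfold Rpower. apply exp_pos. Qed.

Lemma RInt_pow_left_le (x a b be : R) : 0 < x -> a <= b -> 0 < be < 1 ->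
  ex_RInt (fun t => Rpower (x + (t - a)) (- be)) a b /\
  RInt (fun t => Rpower (x + (t - a)) (- be)) a b <= Rpower (x + (b - a)) (1 - be) / (1 - be).
Proof.
  intros Hx Hab Hbe. pose proof (int_pow_left x a b be Hx Hab Hbe) as H.
  split. eexists; exact H.
  rewrite (is_RInt_unique _ _ _ _ H).
  pose proof (Rpower_pos' x (1 - be)). unfold Rdiv.
  apply Rmult_le_compat_r. left; apply Rinv_0_lt_compat; lra. lra.
Qed.

Lemma RInt_pow_right_le (x a b be : R) : 0 < x -> a <= b -> 0 < be < 1 ->
  ex_RInt (fun t => Rpower (x + (b - t)) (- be)) a b /\
  RInt (fun t => Rpower (x + (b - t)) (- be)) a b <= Rpower (x + (b - a)) (1 - be) / (1 - be).
Proof.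
  intros Hx Hab Hbe. pose proof (int_pow_right x a b be Hx Hab Hbe) as H.
  split. eexists; exact H.
  rewrite (is_RInt_unique _ _ _ _ H).
  pose proof (Rpower_pos' x (1 - be)). unfold Rdiv.
  apply Rmult_le_compat_r. left; apply Rinv_0_lt_compat; lra. lra.
Qed.

Lemma exp_le_mono (a b : R) : a <= b -> exp a <= exp b.
Proof. intros H. destruct (Rle_lt_or_eq_dec _ _ H). left; apply exp_increasing; auto. subst; lra. Qed.

Lemma Rpower_le_base_neg (y z e : R) : 0 < y <= z -> 0 <= e -> Rpower z (-e) <= Rpower y (-e).
Proof.
  intros Hy He. unfold Rpower. apply exp_le_mono.
  pose proof (ln_le y z ltac:(lra) ltac:(lra)). nra.
Qed.

Lemma Rpower_le_base_pos (y z e : R) : 0 < y <= z -> 0 <= e -> Rpower y e <= Rpower z e.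
Proof.
  intros Hy He. unfold Rpower. apply exp_le_mono.
  pose proof (ln_le y z ltac:(lra) ltac:(lra)). nra.
Qed.

Lemma pw10 (r u be : R) : 0 <= r < 1 -> 0 <= u <= PI -> 0 <= be <= 1 ->
  Rpower (cm r u) (- be) <= 10 * Rpower ((1 - r) + u) (- be).
Proof.
  intros Hr Hu Hbe.
  eapply Rle_trans. apply Rpower_le_base_neg; [|lra].
  split; [|apply cm_lower; lra]. apply Rdiv_lt_0_compat; lra.
  replace (((1 - r) + u) / 10) with (/ 10 * ((1 - r) + u)) by field.
  rewrite <- Rpower_mult_distr by lra.
  apply Rmult_le_compat_r. left; apply Rpower_pos'.
  unfold Rpower at 1. rewrite ln_Rinv by lra.
  replace (- be * - ln 10) with (be * ln 10) by ring.
  fold (Rpower 10 be). rewrite <- (Rpower_1 10) at 2 by lra.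
  apply Rle_Rpower; lra.
Qed.

Lemma cos_2PI_minus (t : R) : cos (2 * PI - t) = cos t.
Proof. rewrite cos_minus, cos_2PI, sin_2PI. ring. Qed.
Lemma cos_minus_PI (t : R) : cos (t - PI) = - cos t.
Proof. rewrite cos_minus, cos_PI, sin_PI. ring. Qed.
Lemma cos_PI_minus (t : R) : cos (PI - t) = - cos t.
Proof. rewrite cos_minus, cos_PI, sin_PI. ring. Qed.

Definition cp (r t : R) : R := sqrt (1 + 2 * r * cos t + r ^ 2).

Lemma cp_cm1 (r t : R) : cp r t = cm r (t - PI).
Proof. unfold cp, cm. rewrite cos_minus_PI. f_equal. ring. Qed.
Lemma cp_cm2 (r t : R) : cp r t = cm r (PI - t).
Proof. unfold cp, cm. rewrite cos_PI_minus. f_equal. ring. Qed.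
Lemma cm_sym (r t : R) : cm r t = cm r (2 * PI - t).
Proof. unfold cm. rewrite cos_2PI_minus. reflexivity. Qed.

Lemma cp_pos (r t : R) : 0 <= r < 1 -> 0 < cp r t.
Proof. intros. rewrite cp_cm1. apply cm_pos; auto. Qed.

Lemma Cmod_polar_m (r t : R) : Cmod (1 + RtoC (-1) * polar r t)%C = cm r t.
Proof.
  unfold Cmod, polar, cm. cbn [fst snd Cplus Cmult RtoC]. f_equal.
  transitivity (1 - 2 * r * cos t + r^2 * (Rsqr (sin t) + Rsqr (cos t))).
  unfold Rsqr; ring. rewrite sin2_cos2. ring.
Qed.

Lemma Cmod_polar_p (r t : R) : Cmod (1 + RtoC 1 * polar r t)%C = cp r t.
Proof.
  unfold Cmod, polar, cp. cbn [fst snd Cplus Cmult RtoC]. f_equal.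
  transitivity (1 + 2 * r * cos t + r^2 * (Rsqr (sin t) + Rsqr (cos t))).
  unfold Rsqr; ring. rewrite sin2_cos2. ring.
Qed.

Lemma ex_derive_cm_pow (r e t : R) : 0 <= r < 1 -> ex_derive (fun t => Rpower (cm r t) e) t.
Proof.
  intros Hr. assert (H := cm_pos r t Hr). unfold cm in *.
  assert (Hi : 0 < 1 - 2 * r * cos t + r ^ 2).
  { rewrite cm_inside. pose proof (COS_bound t). nra. }
  unfold Rpower. auto_derive. repeat split; auto.
Qed.

Lemma ex_derive_cp_pow (r e t : R) : 0 <= r < 1 -> ex_derive (fun t => Rpower (cp r t) e) t.
Proof.
  intros Hr. assert (H := cp_pos r t Hr). unfold cp in *.
  assert (Hi : 0 < 1 + 2 * r * cos t + r ^ 2).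
  { pose proof (COS_bound t). nra. }
  unfold Rpower. auto_derive. repeat split; auto.
Qed.
Lemma ex_RInt_cm_pow (r e a b : R) : 0 <= r < 1 -> ex_RInt (fun t => Rpower (cm r t) e) a b.
Proof.
  intros Hr. apply (@ex_RInt_continuous R_CompleteNormedModule). intros z _.
  assert (E := ex_derive_cm_pow r e z Hr). apply ex_derive_continuous in E. exact E.
Qed.

Lemma ex_RInt_cp_pow (r e a b : R) : 0 <= r < 1 -> ex_RInt (fun t => Rpower (cp r t) e) a b.
Proof.
  intros Hr. apply (@ex_RInt_continuous R_CompleteNormedModule). intros z _.
  assert (E := ex_derive_cp_pow r e z Hr). apply ex_derive_continuous in E. exact E.
Qed.

Lemma RInt_scal10 (f : R -> R) (a b : R) : ex_RInt f a b ->
  ex_RInt (fun t => 10 * f t) a b /\ RInt (fun t => 10 * f t) a b = 10 * RInt f a b.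
Proof.
  intros H. split.
  - exact (ex_RInt_scal f a b 10 H).
  - exact (RInt_scal f a b 10 H).
Qed.

Lemma int_cm_bound (r be : R) : 0 <= r < 1 -> 0 < be < 1 ->
  RInt (fun t => Rpower (cm r t) (- be)) 0 (2 * PI) <= 20 * (Rpower (1 + PI) (1 - be) / (1 - be)).
Proof.
  intros Hr Hbe. pose proof PI_RGT_0 as Hpi.
  set (F := fun t => Rpower (cm r t) (- be)).
  rewrite <- (RInt_Chasles F 0 PI (2 * PI)) by (apply ex_RInt_cm_pow; auto).
  change (plus ?a ?b) with (a + b).
  assert (Hb : Rpower ((1 - r) + PI) (1 - be) / (1 - be) <= Rpower (1 + PI) (1 - be) / (1 - be)).
  { unfold Rdiv. apply Rmult_le_compat_r. left; apply Rinv_0_lt_compat; lra.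
    apply Rpower_le_base_pos; lra. }
  assert (P1 : RInt F 0 PI <= 10 * (Rpower (1 + PI) (1 - be) / (1 - be))).
  { destruct (RInt_pow_left_le (1 - r) 0 PI be ltac:(lra) ltac:(lra) Hbe) as [E1 B1].
    destruct (RInt_scal10 _ _ _ E1) as [E2 B2].
    eapply Rle_trans. apply (RInt_le F _ 0 PI ltac:(lra) (ex_RInt_cm_pow r _ _ _ Hr) E2).
    intros t Ht. unfold F. replace (t - 0) with t by ring. apply pw10; lra.
    rewrite B2. replace (PI - 0) with PI in B1 by ring. lra. }
  assert (P2 : RInt F PI (2 * PI) <= 10 * (Rpower (1 + PI) (1 - be) / (1 - be))).
  { destruct (RInt_pow_right_le (1 - r) PI (2 * PI) be ltac:(lra) ltac:(lra) Hbe) as [E1 B1].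
    destruct (RInt_scal10 _ _ _ E1) as [E2 B2].
    eapply Rle_trans. apply (RInt_le F _ PI (2 * PI) ltac:(lra) (ex_RInt_cm_pow r _ _ _ Hr) E2).
    intros t Ht. unfold F. rewrite cm_sym. apply pw10; lra.
    rewrite B2. replace (2 * PI - PI) with PI in B1 by ring. lra. }
  lra.
Qed.

Lemma int_cp_bound (r be : R) : 0 <= r < 1 -> 0 < be < 1 ->
  RInt (fun t => Rpower (cp r t) (- be)) 0 (2 * PI) <= 20 * (Rpower (1 + PI) (1 - be) / (1 - be)).
Proof.
  intros Hr Hbe. pose proof PI_RGT_0 as Hpi.
  set (F := fun t => Rpower (cp r t) (- be)).
  rewrite <- (RInt_Chasles F 0 PI (2 * PI)) by (apply ex_RInt_cp_pow; auto).
  change (plus ?a ?b) with (a + b).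
  assert (Hb : Rpower ((1 - r) + PI) (1 - be) / (1 - be) <= Rpower (1 + PI) (1 - be) / (1 - be)).
  { unfold Rdiv. apply Rmult_le_compat_r. left; apply Rinv_0_lt_compat; lra.
    apply Rpower_le_base_pos; lra. }
  assert (P1 : RInt F 0 PI <= 10 * (Rpower (1 + PI) (1 - be) / (1 - be))).
  { destruct (RInt_pow_right_le (1 - r) 0 PI be ltac:(lra) ltac:(lra) Hbe) as [E1 B1].
    destruct (RInt_scal10 _ _ _ E1) as [E2 B2].
    eapply Rle_trans. apply (RInt_le F _ 0 PI ltac:(lra) (ex_RInt_cp_pow r _ _ _ Hr) E2).
    intros t Ht. unfold F. rewrite cp_cm2. apply pw10; lra.
    rewrite B2. replace (PI - 0) with PI in B1 by ring. lra. }
  assert (P2 : RInt F PI (2 * PI) <= 10 * (Rpower (1 + PI) (1 - be) / (1 - be))).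
  { destruct (RInt_pow_left_le (1 - r) PI (2 * PI) be ltac:(lra) ltac:(lra) Hbe) as [E1 B1].
    destruct (RInt_scal10 _ _ _ E1) as [E2 B2].
    eapply Rle_trans. apply (RInt_le F _ PI (2 * PI) ltac:(lra) (ex_RInt_cp_pow r _ _ _ Hr) E2).
    intros t Ht. unfold F. rewrite cp_cm1. apply pw10; lra.
    rewrite B2. replace (2 * PI - PI) with PI in B1 by ring. lra. }
  lra.
Qed.

Lemma RInt_lower (F : R -> R) (a c x : R) : 0 < x <= 1 -> 0 <= c -> 0 <= a -> a + 1 <= 2 * PI ->
  ex_RInt F 0 (2 * PI) -> (forall t, 0 <= t <= 2 * PI -> 0 <= F t) ->
  (forall t, a <= t <= a + 1 -> c * / (x + (t - a)) <= F t) ->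
  c * (- ln x) <= RInt F 0 (2 * PI).
Proof.
  intros Hx Hc Ha Ha1 HF Hpos Hlow.
  assert (E1 : ex_RInt F 0 (a + 1)) by (apply (ex_RInt_Chasles_1 F 0 (a+1) (2*PI)); auto; lra).
  assert (E2 : ex_RInt F (a + 1) (2 * PI)) by (apply (ex_RInt_Chasles_2 F 0 (a+1) (2*PI)); auto; lra).
  assert (E3 : ex_RInt F 0 a) by (apply (ex_RInt_Chasles_1 F 0 a (a+1)); auto; lra).
  assert (E4 : ex_RInt F a (a + 1)) by (apply (ex_RInt_Chasles_2 F 0 a (a+1)); auto; lra).
  rewrite <- (RInt_Chasles F 0 (a + 1) (2 * PI)) by auto.
  rewrite <- (RInt_Chasles F 0 a (a + 1)) by auto.
  change (plus (plus ?u ?v) ?w) with (u + v + w).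
  assert (G1 : 0 <= RInt F 0 a) by (apply RInt_ge_0; auto; intros; apply Hpos; lra).
  assert (G2 : 0 <= RInt F (a + 1) (2 * PI)) by (apply RInt_ge_0; auto; lra || (intros; apply Hpos; lra)).
  assert (I := int_inv_left x a (a + 1) ltac:(lra) ltac:(lra)).
  assert (I' := is_RInt_scal _ _ _ c _ I).
  assert (G3 : RInt (fun t => c * / (x + (t - a))) a (a + 1) <= RInt F a (a + 1)).
  { apply RInt_le; auto. lra. eexists; exact I'. intros; apply Hlow; lra. }
  replace (RInt (fun t => c * / (x + (t - a))) a (a+1)) with (c * (ln (x + (a + 1 - a)) - ln x)) in G3
    by (symmetry; apply is_RInt_unique; exact I').
  replace (x + (a + 1 - a)) with (x + 1) in G3 by ring.
  assert (0 <= ln (x + 1)) by (rewrite <- ln_1; apply ln_le; lra).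
  assert (c * (ln (x + 1) - ln x) >= c * (- ln x)) by nra.
  lra.
Qed.

Lemma powp_pos (x y : R) : 0 < x -> powp x y = Rpower x y.
Proof. intros H. unfold powp. destruct (Rle_dec x 0); [lra|reflexivity]. Qed.

Lemma powp_nonneg (x y : R) : 0 <= powp x y.
Proof. unfold powp. destruct (Rle_dec x 0). lra. left; apply Rpower_pos'. Qed.

Lemma Hq_integrand (w : C) (s q : R) : w <> 0%C ->
  powp (Cmod (Hpow s w)) q = Rpower (Cmod w) (- s * q).
Proof.
  intros Hw. rewrite Cmod_Hpow by auto. rewrite powp_pos by apply Rpower_pos'.
  rewrite Rpower_mult. reflexivity.
Qed.

Lemma Hp_integrand (w : C) (s P lam : R) : w <> 0%C -> 0 < lam ->
  powp (Cmod (Cmult (Hpow s w) (RtoC (/ lam)))) P = Rpower (Cmod w) (- s * P) * Rpower lam (- P).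
Proof.
  intros Hw Hl. rewrite Cmod_mult, Cmod_R, Cmod_Hpow by auto.
  rewrite Rabs_right by (left; apply Rinv_0_lt_compat; auto).
  rewrite powp_pos by (apply Rmult_lt_0_compat; [apply Rpower_pos'|apply Rinv_0_lt_compat; auto]).
  rewrite <- Rpower_mult_distr by (try apply Rpower_pos'; apply Rinv_0_lt_compat; auto).
  rewrite Rpower_mult. f_equal.
  unfold Rpower. rewrite ln_Rinv by auto. f_equal. ring.
Qed.

Lemma cont_Rpower_var (u e : R -> R) (t : R) : continuous u t -> 0 < u t -> continuous e t ->
  continuous (fun t => Rpower (u t) (e t)) t.
Proof.
  intros Hu Hp He. unfold Rpower. apply continuous_exp_comp.
  apply (continuous_mult e (fun t => ln (u t))). auto.
  apply (continuous_comp u ln). auto. apply continuous_ln. auto.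
Qed.

Lemma cont_cm (r t : R) : 0 <= r < 1 -> continuous (fun t => cm r t) t.
Proof.
  intros Hr. assert (H := cm_pos r t Hr). unfold cm in *.
  assert (Hi : 0 < 1 - 2 * r * cos t + r ^ 2).
  { rewrite cm_inside. pose proof (COS_bound t). nra. }
  assert (E : ex_derive (fun t => sqrt (1 - 2 * r * cos t + r ^ 2)) t) by (auto_derive; auto).
  apply ex_derive_continuous in E. exact E.
Qed.

Lemma cont_cp (r t : R) : 0 <= r < 1 -> continuous (fun t => cp r t) t.
Proof.
  intros Hr. assert (H := cp_pos r t Hr). unfold cp in *.
  assert (Hi : 0 < 1 + 2 * r * cos t + r ^ 2).
  { pose proof (COS_bound t). nra. }
  assert (E : ex_derive (fun t => sqrt (1 + 2 * r * cos t + r ^ 2)) t) by (auto_derive; auto).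
  apply ex_derive_continuous in E. exact E.
Qed.

Lemma cont_integrand (c : R -> R) (P : R -> R) (s lam t : R) :
  continuous c t -> 0 < c t -> continuous P t -> 0 < lam ->
  continuous (fun t => Rpower (c t) (- s * P t) * Rpower lam (- P t)) t.
Proof.
  intros Hc Hp HP Hl.
  apply (continuous_mult (fun t => Rpower (c t) (- s * P t)) (fun t => Rpower lam (- P t))).
  - apply cont_Rpower_var; auto.
    apply (continuous_mult (fun _ => - s) P). apply continuous_const. auto.
  - apply (cont_Rpower_var (fun _ => lam) (fun t => - P t)); auto. apply continuous_const.
    apply (continuous_opp P). auto.
Qed.

Lemma fst_pos_m (z : C) : Cmod z < 1 -> 0 < fst (1 + RtoC (-1) * z)%C.
Proof.
  intros H. pose proof (abs_fst_le z). destruct z as [x y]. simpl in *.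
  assert (Rabs x < 1) by lra.
  apply Rabs_def2 in H1 as [H1 H2]. lra.
Qed.
Lemma fst_pos_p (z : C) : Cmod z < 1 -> 0 < fst (1 + RtoC 1 * z)%C.
Proof.
  intros H. pose proof (abs_fst_le z). destruct z as [x y]. simpl in *.
  assert (Rabs x < 1) by lra.
  apply Rabs_def2 in H1 as [H1 H2]. lra.
Qed.

Lemma polar_ne_m (r t : R) : 0 <= r < 1 -> (1 + RtoC (-1) * polar r t)%C <> 0%C.
Proof.
  intros Hr E. pose proof (cm_pos r t Hr). rewrite <- Cmod_polar_m in H. rewrite E, Cmod_0 in H. lra.
Qed.
Lemma polar_ne_p (r t : R) : 0 <= r < 1 -> (1 + RtoC 1 * polar r t)%C <> 0%C.
Proof.
  intros Hr E. pose proof (cp_pos r t Hr). rewrite <- Cmod_polar_p in H. rewrite E, Cmod_0 in H. lra.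
Qed.

Lemma cos_ge_half (t : R) : 0 <= t <= 1 -> 1/2 <= cos t.
Proof. intros H. pose proof (cos_upper t ltac:(lra)). nra. Qed.

Lemma Rpower_m1 (x : R) : 0 < x -> Rpower x (- (1)) = / x.
Proof. intros H. rewrite Rpower_Ropp, Rpower_1; auto. Qed.

Lemma g_not_Hp (q1 q2 : R) : 1 < q1 -> q1 < q2 ->
  ~ in_Hpvar (pex q1 q2) (fun z => Hpow (/ q2) (1 + RtoC (-1) * z)%C).
Proof.
  intros Hq1 Hq12 [_ [M HM]].
  pose proof PI_RGT_0 as Hpi. pose proof PI2_1.
  set (Lam := Rmax M 1 + 1).
  assert (HL1 : M < Lam) by (unfold Lam; pose proof (Rmax_l M 1); lra).
  assert (HL2 : 1 < Lam) by (unfold Lam; pose proof (Rmax_r M 1); lra).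
  set (c := Rpower Lam (- q2)).
  assert (Hc : 0 < c) by apply Rpower_pos'.
  set (A := Rpower Lam q2 + 1).
  assert (HA : 0 < A) by (unfold A; pose proof (Rpower_pos' Lam q2); lra).
  set (x := exp (- A)).
  assert (Hx : 0 < x <= 1).
  { split. apply exp_pos. rewrite <- exp_0. apply exp_le_mono. lra. }
  set (r := 1 - x).
  assert (Hr : 0 <= r < 1) by (unfold r; lra).
  specialize (HM r Hr). unfold lux_norm in HM.
  set (S := fun lam => 0 < lam /\ modular (pex q1 q2)
      (fun t => Cmult (circ (fun z => Hpow (/ q2) (1 + RtoC (-1) * z)%C) r t) (RtoC (/ lam))) <= 1) in HM.
  assert (LB : is_lb_Rbar S Lam).
  { intros lam [Hl Hmod]. simpl. destruct (Rle_dec Lam lam) as [|Hn]; auto. exfalso.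
    set (G := fun t => Rpower (cm r t) (- / q2 * pex q1 q2 t) * Rpower lam (- pex q1 q2 t)).
    unfold modular in Hmod.
    rewrite (RInt_ext _ G) in Hmod.
    2:{ intros t _. unfold circ, G. rewrite Hp_integrand. rewrite Cmod_polar_m. reflexivity.
        apply polar_ne_m; auto. auto. }
    assert (Low : c * (- ln x) <= RInt G 0 (2 * PI)).
    { apply RInt_lower with (a := 0); try lra.
      - apply (@ex_RInt_continuous R_CompleteNormedModule). intros z _. unfold G.
        apply (cont_integrand (fun t => cm r t) (pex q1 q2)); auto.
        apply cont_cm; auto. apply cm_pos; auto. apply pex_cont; auto.
      - intros t _. unfold G. left. apply Rmult_lt_0_compat; apply Rpower_pos'.
      - intros t Ht. unfold G. rewrite pex_hi by (apply cos_ge_half; lra).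
        replace (- / q2 * q2) with (- (1)) by (field; lra).
        rewrite Rpower_m1 by (apply cm_pos; auto).
        assert (Hcm : 0 < cm r t) by (apply cm_pos; auto).
        assert (Hup : cm r t <= x + (t - 0)).
        { replace (x + (t - 0)) with ((1 - r) + t) by (unfold r; ring). apply cm_upper; lra. }
        assert (I1 : / (x + (t - 0)) <= / cm r t) by (apply Rinv_le_contravar; auto).
        assert (I2 : c <= Rpower lam (- q2)) by (unfold c; apply Rpower_le_base_neg; lra).
        rewrite Rmult_comm. apply Rmult_le_compat; auto.
        left; apply Rinv_0_lt_compat; lra. lra. }
    unfold x in Low. rewrite ln_exp in Low.
    assert (c * - - A = 1 + c).
    { unfold A, c. rewrite Ropp_involutive, Rmult_plus_distr_l, Rmult_1_r.
      rewrite Rpower_Ropp, Rinv_l. ring. apply Rgt_not_eq, Rpower_pos'. }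
    lra. }
  destruct (Glb_Rbar_correct S) as [_ Hglb].
  specialize (Hglb Lam LB).
  assert (X := Rbar_le_trans _ _ _ Hglb HM). simpl in X. lra.
Qed.

Lemma g_in_Hq (q1 q2 q : R) : 1 < q1 -> q1 <= q < q2 ->
  in_Hq q (fun z => Hpow (/ q2) (1 + RtoC (-1) * z)%C).
Proof.
  intros Hq1 Hq. split.
  - apply Hpow_affine_analytic. intros; apply fst_pos_m; auto.
  - exists (20 * (Rpower (1 + PI) (1 - / q2 * q) / (1 - / q2 * q))). intros r Hr.
    rewrite (RInt_ext _ (fun t => Rpower (cm r t) (- (/ q2 * q)))).
    + apply int_cm_bound; auto. split.
      apply Rmult_lt_0_compat; [apply Rinv_0_lt_compat|]; lra.
      apply (Rmult_lt_reg_l q2). lra. rewrite <- Rmult_assoc, Rinv_r; lra.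
    + intros t _. unfold circ. rewrite Hq_integrand by (apply polar_ne_m; auto).
      rewrite Cmod_polar_m. f_equal. ring.
Qed.

Lemma f_not_Hq2 (q1 q2 : R) : 1 < q1 -> q1 < q2 ->
  ~ in_Hq q2 (fun z => Hpow (/ q2) (1 + RtoC 1 * z)%C).
Proof.
  intros Hq1 Hq12 [_ [M HM]].
  pose proof PI_RGT_0 as Hpi. pose proof PI2_1.
  set (x := exp (- (Rabs M + 1))).
  assert (Hx : 0 < x <= 1).
  { split. apply exp_pos. rewrite <- exp_0. apply exp_le_mono. pose proof (Rabs_pos M). lra. }
  set (r := 1 - x).
  assert (Hr : 0 <= r < 1) by (unfold r; lra).
  specialize (HM r Hr).
  rewrite (RInt_ext _ (fun t => Rpower (cp r t) (- (1)))) in HM.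
  2:{ intros t _. unfold circ. rewrite Hq_integrand by (apply polar_ne_p; auto).
      rewrite Cmod_polar_p. f_equal. field. lra. }
  assert (Low : 1 * (- ln x) <= RInt (fun t => Rpower (cp r t) (- (1))) 0 (2 * PI)).
  { apply RInt_lower with (a := PI); try lra.
    - apply ex_RInt_cp_pow; auto.
    - intros t _. left. apply Rpower_pos'.
    - intros t Ht. rewrite Rpower_m1 by (apply cp_pos; auto).
      assert (Hcp : 0 < cp r t) by (apply cp_pos; auto).
      assert (Hup : cp r t <= x + (t - PI)).
      { rewrite cp_cm1. replace (x + (t - PI)) with ((1 - r) + (t - PI)) by (unfold r; ring).
        apply cm_upper; lra. }
      rewrite Rmult_1_l. apply Rinv_le_contravar; auto. }
  unfold x in Low. rewrite ln_exp in Low. pose proof (Rle_abs M). lra.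
Qed.

Lemma Rpower_half_bound (y e : R) : 1/2 <= y -> 0 <= e <= 1 -> Rpower y (- e) <= 2.
Proof.
  intros Hy He. eapply Rle_trans. apply (Rpower_le_base_neg (1/2) y e); lra.
  unfold Rpower at 1. replace (1/2) with (/ 2) by field. rewrite ln_Rinv by lra.
  replace (- e * - ln 2) with (e * ln 2) by ring. fold (Rpower 2 e).
  rewrite <- (Rpower_1 2) at 2 by lra. apply Rle_Rpower; lra.
Qed.

Lemma f_in_Hp (q1 q2 : R) : 1 < q1 -> q1 < q2 ->
  in_Hpvar (pex q1 q2) (fun z => Hpow (/ q2) (1 + RtoC 1 * z)%C).
Proof.
  intros Hq1 Hq12. pose proof PI_RGT_0 as Hpi.
  split.
  { apply Hpow_affine_analytic. intros; apply fst_pos_p; auto. }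
  set (b1 := / q2 * q1).
  assert (Hb1 : 0 < b1 < 1).
  { unfold b1. split. apply Rmult_lt_0_compat; [apply Rinv_0_lt_compat|]; lra.
    apply (Rmult_lt_reg_l q2). lra. rewrite <- Rmult_assoc, Rinv_r; lra. }
  set (K := 2 * (2 * PI - 0) + 20 * (Rpower (1 + PI) (1 - b1) / (1 - b1))).
  set (Lam := Rmax 1 K).
  assert (HL1 : 1 <= Lam) by apply Rmax_l.
  assert (HLK : K <= Lam) by apply Rmax_r.
  exists Lam. intros r Hr. unfold lux_norm.
  match goal with |- Rbar_le (Glb_Rbar ?S) _ => destruct (Glb_Rbar_correct S) as [Hlb _] end.
  apply Hlb. split. lra.
  set (G := fun t => Rpower (cp r t) (- / q2 * pex q1 q2 t) * Rpower Lam (- pex q1 q2 t)).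
  unfold modular.
  rewrite (RInt_ext _ G).
  2:{ intros t _. unfold circ, G. rewrite Hp_integrand. rewrite Cmod_polar_p. reflexivity.
      apply polar_ne_p; auto. lra. }
  set (H := fun t => Rpower (cp r t) (- b1)).
  assert (EH : ex_RInt H 0 (2 * PI)) by (apply ex_RInt_cp_pow; auto).
  assert (IM : is_RInt (fun t => scal (/ Lam) (plus 2 (H t))) 0 (2 * PI)
                 (scal (/ Lam) (plus (scal (2 * PI - 0) 2) (RInt H 0 (2 * PI))))).
  { apply (@is_RInt_scal R_NormedModule). apply (@is_RInt_plus R_NormedModule). apply (@is_RInt_const R_NormedModule). apply (@RInt_correct R_CompleteNormedModule). auto. }
  assert (Hle : RInt G 0 (2 * PI) <= RInt (fun t => scal (/ Lam) (plus 2 (H t))) 0 (2 * PI)).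
  { apply RInt_le. lra.
    - apply (@ex_RInt_continuous R_CompleteNormedModule). intros z _. unfold G.
      apply (cont_integrand (fun t => cp r t) (pex q1 q2)); auto.
      apply cont_cp; auto. apply cp_pos; auto. apply pex_cont; auto. lra.
    - eexists; exact IM.
    - intros t Ht. unfold G, H. change (scal ?a ?b) with (a * b). change (plus ?a ?b) with (a + b).
      assert (Hp := pex_range q1 q2 t Hq12).
      assert (A1 : Rpower Lam (- pex q1 q2 t) <= / Lam).
      { rewrite <- Rpower_m1 by lra. apply Rle_Rpower; lra. }
      assert (A2 : Rpower (cp r t) (- / q2 * pex q1 q2 t) <= 2 + Rpower (cp r t) (- b1)).
      { destruct (Rle_dec (cos t) (-1/2)) as [Hc|Hc].
        - rewrite pex_lo by auto. unfold b1. replace (- / q2 * q1) with (- (/ q2 * q1)) by ring.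
          pose proof (Rpower_pos' (cp r t) (- (/ q2 * q1))). lra.
        - replace (- / q2 * pex q1 q2 t) with (- (/ q2 * pex q1 q2 t)) by ring.
          pose proof (Rpower_pos' (cp r t) (- b1)).
          assert (Hc' : 1/2 <= cp r t) by (apply cp_lower; lra).
          assert (He : 0 <= / q2 * pex q1 q2 t <= 1).
          { split. apply Rmult_le_pos; [left; apply Rinv_0_lt_compat|]; lra.
            apply (Rmult_le_reg_l q2). lra. rewrite <- Rmult_assoc, Rinv_r; lra. }
          pose proof (Rpower_half_bound _ _ Hc' He). lra. }
      rewrite (Rmult_comm (/ Lam)). apply Rmult_le_compat; try (left; apply Rpower_pos'); auto. }
  rewrite (is_RInt_unique _ _ _ _ IM) in Hle.
  change (scal ?a ?b) with (a * b) in Hle. change (plus ?a ?b) with (a + b) in Hle.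
  change (scal ?a ?b) with (a * b) in Hle.
  assert (HI := int_cp_bound r b1 Hr Hb1). fold H in HI.
  assert (/ Lam * ((2 * PI - 0) * 2 + RInt H 0 (2 * PI)) <= 1).
  { apply (Rmult_le_reg_l Lam). lra. rewrite <- Rmult_assoc, Rinv_r, Rmult_1_l by lra.
    unfold K in HLK. lra. }
  lra.
Qed.

Theorem proposition3p1 (q1 q2 : R) (hq1 : 1 < q1) (hq12 : q1 < q2) :
  exists p : R -> R,
    (forall t : R, p (t + 2 * PI) = p t) /\
    log_Holder p /\
    (forall t : R, 0 <= t <= 2 * PI -> q1 <= p t <= q2) /\
    (forall q : R, q1 <= q <= q2 ->
       ~ (forall f : C -> C, in_Hpvar p f <-> in_Hq q f)).
Proof.
  exists (pex q1 q2). split; [|split; [|split]].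
  - intros t. apply pex_period.
  - unfold log_Holder. apply pex_logHolder. auto.
  - intros t _. apply pex_range. auto.
  - intros q Hq Hiff. destruct (Rle_lt_or_eq_dec q q2 (proj2 Hq)) as [Hlt|Heq].
    + apply (g_not_Hp q1 q2); auto. apply Hiff. apply g_in_Hq with q1; lra.
    + subst q. apply (f_not_Hq2 q1 q2); auto. apply Hiff. apply f_in_Hp; auto.
Qed.
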